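(* Let each directed channel of a fully connected network of $n$ processes be timely independently with the same probability $p<1$ (with $p>0$ fixed). In a multi-hop Omega implementation, a leader can exist only if some process has directed paths of timely channels to all other processes. Then the probability of leader existence in any multi-hop Omega implementation, i.e. the probability that there exists a process having a directed path of timely channels to every other process, approaches $1$ exponentially fast as $n\to\infty$.
   Context: A network has $n$ processes and a directed channel from every process to every other process. Each directed channel is timely with probability $p$, independently of all other channels. In a multi-hop implementation of the Omega failure detector, a message may reach its destination by being forwarded through intermediate processes, so a process can be the leader provided it has a timely directed path (a path all of whose channels are timely) to every other process. *)

(* Defs.v *)
From mathcomp Require Import all_boot all_order all_algebra.
Set Implicit Arguments. Unset Strict Implicit. Unset Printing Implicit Defensive.
Import Order.TTheory GRing.Theory Num.Theory.
Local Open Scope ring_scope.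

(* A channel configuration on n processes: g (i, j) = true iff the directed
   channel i -> j is timely.  Only off-diagonal entries are meaningful; valid
   configurations have no self-channel. *)
Definition config (n : nat) := {ffun 'I_n * 'I_n -> bool}.

Definition valid_config n (g : config n) : bool := [forall i : 'I_n, ~~ g (i, i)].

Definition cfg_weight (R : pzRingType) (p : R) n (g : config n) : R :=
  \prod_(ij : 'I_n * 'I_n | ij.1 != ij.2) (if g ij then p else 1 - p).

Definition timely_source n (g : config n) (i : 'I_n) : bool :=
  [forall j : 'I_n, (j != i) ==> connect (fun x y => g (x, y)) i j].

Definition leader_possible n (g : config n) : bool :=
  [exists i : 'I_n, timely_source g i].

Definition leader_prob (R : pzRingType) (p : R) (n : nat) : R :=
  \sum_(g : config n | valid_config g && leader_possible g) cfg_weight p g.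

(* Main.v *)
Require Import Defs.
From mathcomp Require Import all_boot all_order all_algebra.
From mathcomp Require Import lra ring zify.
Import Order.TTheory GRing.Theory Num.Theory.
Set Implicit Arguments. Unset Strict Implicit. Unset Printing Implicit Defensive.
Local Open Scope ring_scope.

Definition wt (R : realFieldType) (p : R) n (ij : 'I_n * 'I_n) (b : bool) : R :=
  if ij.1 == ij.2 then (if b then 0 else 1) else (if b then p else 1 - p).

Definition W (R : realFieldType) (p : R) n (g : config n) : R :=
  \prod_ij wt p ij (g ij).

Lemma sumW (R : realFieldType) (p : R) n : \sum_(g : config n) W p g = 1.
Proof.
rewrite /W -(bigA_distr_bigA (fun ij b => wt p ij b)).
by apply: big1 => ij _; rewrite big_bool /wt; case: ifP => _ /=; ring.
Qed.

Lemma W_ge0 (R : realFieldType) (p : R) n (g : config n) :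
  0 <= p -> p <= 1 -> 0 <= W p g.
Proof.
move=> h0 h1; apply: prodr_ge0 => ij _; rewrite /wt.
by case: ifP => _; case: (g ij) => //; lra.
Qed.

Lemma W_valid (R : realFieldType) (p : R) n (g : config n) :
  W p g = if valid_config g then cfg_weight p g else 0.
Proof.
rewrite /W (bigID (fun ij : 'I_n * 'I_n => ij.1 != ij.2)) /=.
rewrite /cfg_weight.
have -> : \prod_(ij | true && (ij.1 != ij.2)) wt p ij (g ij) =
  \prod_(ij : 'I_n * 'I_n | ij.1 != ij.2) (if g ij then p else 1 - p).
  by apply: eq_big => // ij /= /negbTE; rewrite /wt => ->.
case: (boolP (valid_config g)) => hv.
  rewrite [X in _ * X]big1 ?mulr1 // => -[i j] /=; rewrite negbK => /eqP ->.
  by move/forallP: hv => /(_ j) /negbTE; rewrite /wt eqxx => ->.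
move/forallPn: hv => [i]; rewrite negbK => gi.
rewrite [X in _ * X](bigD1 (i, i)) /= ?eqxx //.
by rewrite /wt eqxx gi mul0r mulr0.
Qed.

Lemma leader_probE (R : realFieldType) (p : R) n :
  leader_prob p n = \sum_(g : config n | leader_possible g) W p g.
Proof.
rewrite /leader_prob.
under [RHS]eq_bigr => g _ do rewrite W_valid.
rewrite -big_mkcondr; apply: eq_bigl => g; exact: andbC.
Qed.

Lemma one_sub_leader (R : realFieldType) (p : R) n :
  1 - leader_prob p n = \sum_(g : config n | ~~ leader_possible g) W p g.
Proof.
rewrite leader_probE -(sumW p n) (bigID (fun g => leader_possible g)) /=.
ring.
Qed.

Definition Kp n (z j : 'I_n) : pred 'I_n := fun k => (k != z) && (k != j).
Arguments Kp : simpl never.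

Lemma prod_split (R : realFieldType) n (z j : 'I_n) (h : 'I_n * 'I_n -> R) :
  (forall i j', i != z -> ~~ ((j' == j) && Kp z j i) -> h (i, j') = 1) ->
  \prod_ij h ij = \prod_k (h (z, k) * (if Kp z j k then h (k, j) else 1)).
Proof.
move=> H.
transitivity (\prod_i \prod_j' h (i, j')).
  by rewrite pair_bigA; apply: eq_bigr => -[].
rewrite big_split /= [LHS](bigD1 z) //=; congr (_ * _).
rewrite [RHS](bigD1 z) //= /Kp eqxx /= mul1r.
apply: eq_bigr => i iz.
case: (boolP (Kp z j i)) => Ki; rewrite -/(Kp z j i) ?(negbTE Ki) ?Ki.
  rewrite (bigD1 j) //= big1 ?mulr1 // => j' j'j.
  by apply: H => //; rewrite (negbTE j'j).
by apply: big1 => j' _; apply: H => //; rewrite (negbTE Ki) andbF.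
Qed.

Definition Fc (R : realFieldType) n (z j : 'I_n) (c : {ffun 'I_n -> bool})
  (ij : 'I_n * 'I_n) (b : bool) : R :=
  if ij.1 == z then
    (if Kp z j ij.2 then (if c ij.2 then (~~ b)%:R else b%:R) else (c ij.2)%:R)
  else if (ij.2 == j) && Kp z j ij.1 then (if c ij.1 then 1 else (~~ b)%:R)
  else 1.

Definition Bad n (z j : 'I_n) (g : config n) : bool :=
  [forall k, Kp z j k ==> ~~ (g (z, k) && g (k, j))].

Lemma prod_ind (R : realFieldType) n (P : pred 'I_n) (b : 'I_n -> bool) :
  \prod_k (if P k then (b k)%:R else 1) = ([forall k, P k ==> b k]%:R : R).
Proof.
case: (boolP [forall k, P k ==> b k]) => h.
  apply: big1 => k _; case: ifP => // Pk.
  by move/forallP: h => /(_ k); rewrite Pk /= => ->.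
move/forallPn: h => [k]; rewrite negb_imply => /andP[Pk bk].
by rewrite (bigD1 k) //= Pk (negbTE bk) mul0r.
Qed.

Lemma Bad_expand (R : realFieldType) n (z j : 'I_n) (g : config n) :
  (Bad z j g)%:R = \sum_(c : {ffun 'I_n -> bool}) \prod_ij (Fc R z j c ij (g ij)).
Proof.
transitivity (\sum_(c : {ffun 'I_n -> bool}) \prod_k
   (if Kp z j k then (if c k then (~~ g (z, k))%:R else (g (z, k) && ~~ g (k, j))%:R)
    else (c k)%:R : R)); last first.
  apply: eq_bigr => c _; rewrite (prod_split (z:=z) (j:=j)); last first.
    move=> i j' iz; rewrite /Fc /= (negbTE iz) => /negbTE -> //.
  apply: eq_bigr => k _; rewrite /Fc /= eqxx.
  case: (boolP (Kp z j k)) => Kk; last by rewrite mulr1.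
  have kz : (k == z) = false by move: Kk => /andP[/negbTE].
  rewrite kz eqxx /=.
  by case: (c k); case: (g (z, k)); case: (g (k, j)); rewrite /= ?mulr1 ?mulr0 ?mul0r ?mul1r.
rewrite -(bigA_distr_bigA (fun k (b : bool) => (if Kp z j k then (if b then (~~ g (z, k))%:R else (g (z, k) && ~~ g (k, j))%:R)
    else b%:R : R))).
rewrite /Bad -prod_ind; apply: eq_bigr => k _; rewrite big_bool.
case: (Kp z j k); last by rewrite /= addr0.
by case: (g (z, k)); case: (g (k, j)); rewrite /= ?addr0 ?add0r.
Qed.

Lemma E_Fc (R : realFieldType) (p : R) n (z j : 'I_n) (c : {ffun 'I_n -> bool}) :
  \sum_(g : config n) W p g * \prod_ij (Fc R z j c ij (g ij)) =
  \prod_k (if Kp z j k then (if c k then 1 - p else p * (1 - p)) else (c k)%:R).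
Proof.
transitivity (\sum_(g : config n) \prod_ij (wt p ij (g ij) * Fc R z j c ij (g ij))).
  by apply: eq_bigr => g _; rewrite /W -big_split.
rewrite -(bigA_distr_bigA (fun ij b => wt p ij b * Fc R z j c ij b)).
rewrite (prod_split (z:=z) (j:=j)); last first.
  move=> i j' iz H; rewrite big_bool /Fc /= (negbTE iz) (negbTE H) !mulr1 /wt.
  by case: ifP => _ /=; ring.
apply: eq_bigr => k _; rewrite !big_bool /Fc /wt /= eqxx.
case: (boolP (Kp z j k)) => Kk.
  have kz : (k == z) = false by move: Kk => /andP[/negbTE].
  have kj : (k == j) = false by move: Kk => /andP[_ /negbTE].
  rewrite eq_sym kz kj eqxx /=.
  by case: (c k) => /=; ring.
rewrite /=.
by case: ifP => _; case: (c k) => /=; ring.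
Qed.

Lemma E_Bad (R : realFieldType) (p : R) n (z j : 'I_n) :
  \sum_(g : config n) W p g * (Bad z j g)%:R = (1 - p ^+ 2) ^+ #|Kp z j|.
Proof.
under eq_bigr => g _ do rewrite (Bad_expand R) mulr_sumr.
rewrite exchange_big /=.
under eq_bigr => c _ do rewrite E_Fc.
rewrite -(bigA_distr_bigA (fun k (b : bool) =>
   (if Kp z j k then (if b then 1 - p else p * (1 - p)) else b%:R : R))).
transitivity (\prod_k (if Kp z j k then 1 - p ^+ 2 else 1)).
  apply: eq_bigr => k _; rewrite big_bool.
  by case: (Kp z j k) => /=; [ring | rewrite addr0].
by rewrite -big_mkcond prodr_const.
Qed.

Lemma card_Kp n (z j : 'I_n) : z != j -> #|Kp z j| = (n - 2)%N.
Proof.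
move=> zj.
have -> : #|Kp z j| = #|~: [set z; j]|.
  by apply: eq_card => k; rewrite !inE negb_or /Kp /=.
have := cardsC [set z; j]; rewrite cards2 zj card_ord; lia.
Qed.

Lemma union_bound (R : realFieldType) (p : R) m :
  0 <= p -> p <= 1 ->
  \sum_(g : config m.+1 | ~~ leader_possible g) W p g <=
  \sum_(j | j != ord0) \sum_(g : config m.+1) W p g * (Bad ord0 j g)%:R.
Proof.
move=> h0 h1.
rewrite exchange_big /= big_mkcond /=; apply: ler_sum => g _.
rewrite -mulr_sumr.
case: ifP => hl.
  rewrite -[X in X <= _]mulr1; apply: ler_wpM2l; first exact: W_ge0.
  move: hl => /existsPn /(_ ord0) /forallPn [j]; rewrite negb_imply => /andP[jz nc].
  rewrite (bigD1 j) //=.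
  have -> : Bad ord0 j g.
    apply/forallP => k; apply/implyP => _; apply/negP => /andP[h1' h2'].
    by move/negP: nc; apply; apply: connect_trans (connect1 h1') (connect1 h2').
  by rewrite lerDl; apply: sumr_ge0 => i _; rewrite ler0n.
by apply: mulr_ge0; [exact: W_ge0 | apply: sumr_ge0 => i _; rewrite ler0n].
Qed.

Lemma arith (R : realFieldType) (r q : R) : 0 <= r -> r < q -> forall k : nat,
  k.+1%:R * r ^+ k * (q - r) <= q ^+ k.+1 - r ^+ k.+1.
Proof.
move=> r0 rq; elim=> [|k IH]; first by rewrite !expr1 expr0 mulr1 mul1r.
set A := k.+1%:R * r ^+ k * (q - r) in IH.
have SQ : r ^+ k.+1 <= q ^+ k.+1 by apply: lerXn2r; rewrite ?nnegrE //; lra.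
have e1 : k.+2%:R * r ^+ k.+1 * (q - r) = r * A + r ^+ k.+1 * (q - r).
  by rewrite /A exprS -addn1 natrD; ring.
have e2 : q ^+ k.+2 = q * q ^+ k.+1 by rewrite exprS.
have e3 : r ^+ k.+2 = r * r ^+ k.+1 by rewrite exprS.
rewrite e1 e2 e3.
have H1 : r * A <= r * (q ^+ k.+1 - r ^+ k.+1) by apply: ler_wpM2l.
have H2 : 0 <= (q - r) * (q ^+ k.+1 - r ^+ k.+1) by apply: mulr_ge0; lra.
nra.
Qed.

Lemma final_arith (R : realFieldType) (r q : R) : 0 <= r -> r < q -> 0 < q ->
  forall m : nat, m%:R * r ^+ m.-1 <= 1 / ((q - r) * q) * q ^+ m.+1.
Proof.
move=> r0 rq q0 [|k]; first by rewrite mul0r; apply: mulr_ge0;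
  [rewrite mul1r invr_ge0; apply: mulr_ge0; lra | apply: exprn_ge0; lra].
have -> : 1 / ((q - r) * q) * q ^+ k.+2 = q ^+ k.+1 / (q - r).
  rewrite exprS; field; apply/andP; split; apply/eqP; lra.
rewrite ler_pdivlMr; last lra.
apply: le_trans (arith r0 rq k) _.
have : 0 <= r ^+ k.+1 by apply: exprn_ge0.
lra.
Qed.

Theorem theorem2 (R : realFieldType) (p : R) (hp0 : 0 < p) (hp1 : p < 1) :
  exists (C q : R), 0 < C /\ 0 < q /\ q < 1 /\
    forall n : nat, 1 - leader_prob p n <= C * q ^+ n.
Proof.
set r := 1 - p ^+ 2.
have p2 : 0 < p ^+ 2 < 1.
  rewrite expr2; apply/andP; split; first exact: mulr_gt0.
  by nra.
have r0 : 0 <= r by rewrite /r; lra.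
set q := (1 + r) / 2.
have rq : r < q by rewrite /q /r; lra.
have q0 : 0 < q by rewrite /q; lra.
have q1 : q < 1 by rewrite /q /r; lra.
have Cpos : 0 < (q - r) * q by apply: mulr_gt0; lra.
exists (1 / ((q - r) * q)), q; split; first by rewrite mul1r invr_gt0.
split; first exact: q0. split; first exact: q1.
have h0 : 0 <= p by lra.
have h1 : p <= 1 by lra.
case=> [|m].
  rewrite expr0 mulr1.
  have lp : 0 <= leader_prob p 0.
    by rewrite leader_probE; apply: sumr_ge0 => g _; exact: W_ge0.
  have C1 : 1 <= 1 / ((q - r) * q).
    rewrite ler_pdivlMr // mul1r.
    have : (q - r) * q <= 1 * q by apply: ler_wpM2r; lra.
    lra.
  lra.
rewrite one_sub_leader; apply: le_trans (union_bound m h0 h1) _.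
have -> : \sum_(j | j != (ord0 : 'I_m.+1))
            \sum_(g : config m.+1) W p g * (Bad ord0 j g)%:R =
          \sum_(j | j != (ord0 : 'I_m.+1)) r ^+ m.-1.
  apply: eq_bigr => j jz; rewrite E_Bad card_Kp; last by rewrite eq_sym.
  by rewrite subSS subn1.
rewrite (eq_bigl (fun j => j \in predC1 (ord0 : 'I_m.+1))); last by move=> j; rewrite inE.
rewrite sumr_const cardC1 card_ord /= -mulr_natl.
exact: final_arith.
Qed.
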